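(* Let $m\ge2$, $0\le s\le m$, $j,k\in\{1,\dots,m\}$. Denote by $\hat\lambda=(\lambda_1,\dots,\lambda_{j-1},\lambda_{j+1},\dots,\lambda_m)$ and $\hat\xi=(\xi_1,\dots,\xi_{k-1},\xi_{k+1},\dots,\xi_m)$. Then, at $\lambda_j=\xi_k-i\zeta/2$: (i) if $j>s$ (i.e. $\epsilon_j=\tfrac12$), $$\tilde G_s(m,\{\lambda_l\}|\{\xi_l\})\Big|_{\lambda_j=\xi_k-i\zeta/2}=\prod_{a\neq k}\sinh(\lambda_j-\xi_a-i\tfrac\zeta2)\prod_{a\ne j}\sinh(\lambda_a-\xi_k-i\tfrac\zeta2)\;\tilde G_s(m-1,\hat\lambda|\hat\xi);$$ (ii) if $j\le s$ (i.e. $\epsilon_j=-\tfrac12$), $$\tilde G_s(m,\{\lambda_l\}|\{\xi_l\})\Big|_{\lambda_j=\xi_k-i\zeta/2}=\prod_{a\neq k}\sinh(\lambda_j-\xi_a-i\tfrac\zeta2)\prod_{a\ne j}\sinh(\lambda_a-\xi_k-i\tfrac\zeta2)\;\tilde G_{s-1}(m-1,\hat\lambda|\hat\xi).$$ In both cases the $m-1$ remaining $\lambda$'s keep their original order (so the first $s$, resp. $s-1$, of them are those with $\epsilon=-\tfrac12$).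
   Context: Fix $\zeta\in(0,\pi)$. For integers $m\ge1$, $0\le s\le m$, set $\epsilon_j=-\tfrac12$ for $j\le s$ and $\epsilon_j=+\tfrac12$ for $j>s$ ($\epsilon_j$ attached to $\lambda_j$). Define $$G_s(m,\{\lambda_j\}|\{\xi_k\})=\frac{1}{s!(m-s)!}\sum_{\sigma\in S_m}(-1)^{[\sigma]}\prod_{1\le k<j\le m}\frac{\sinh(\lambda_{\sigma(j)}-\xi_k+i\epsilon_{\sigma(j)}\zeta)\,\sinh(\lambda_{\sigma(k)}-\xi_j-i\epsilon_{\sigma(k)}\zeta)}{\sinh(\lambda_{\sigma(j)}-\lambda_{\sigma(k)}+i(\epsilon_{\sigma(j)}+\epsilon_{\sigma(k)})\zeta)}$$ ($(-1)^{[\sigma]}$ the sign of $\sigma$), and define $\tilde G_s$ by $$G_s(m,\{\lambda_j\}|\{\xi_k\})=\frac{1}{s!(m-s)!}\prod_{1\le k<j\le m}\frac{\sinh(\lambda_j-\lambda_k)}{\sinh(\lambda_j-\lambda_k+i(\epsilon_j+\epsilon_k)\zeta)\,\sinh(\lambda_j-\lambda_k-i(\epsilon_j+\epsilon_k)\zeta)}\;\tilde G_s(m,\{\lambda_j\}|\{\xi_k\}),$$ as meromorphic functions (removable singularities extended by continuity). In particular $\tilde G_0(1,\lambda_1|\xi_1)=\tilde G_1(1,\lambda_1|\xi_1)=1$. *)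

(* Defs.v *)
From mathcomp Require Import all_boot all_order all_algebra all_fingroup.
From mathcomp Require Import reals sequences exp trigo.
From mathcomp Require Import complex.
Set Implicit Arguments. Unset Strict Implicit. Unset Printing Implicit Defensive.
Import Order.TTheory GRing.Theory Num.Theory.
Local Open Scope ring_scope.
Local Open Scope complex_scope.

Section Defs.
Variable R : realType.
Local Notation C := R[i].

Definition cexp (z : C) : C :=
  let: a +i* b := z in (expR a * cos b) +i* (expR a * sin b).

Definition csinh (z : C) : C := (cexp z - cexp (- z)) / 2.

(* Indices are 0-based: lambda_1..lambda_m of the paper are lam 0 .. lam (m-1).
   eps s a = -1/2 if a < s (i.e. paper index a+1 <= s), +1/2 otherwise. *)
Definition eps (s a : nat) : C := if (a < s)%N then - (1 / 2) else 1 / 2.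

Definition izeta (zeta : R) : C := 'i * zeta%:C.

Definition Gs (zeta : R) (s m : nat) (lam xi : nat -> C) : C :=
  (((s`! * (m - s)`!)%N)%:R)^-1 *
  \sum_(sg : 'S_m) ((-1) ^+ sg *
    \prod_(k < m) \prod_(j < m | (k < j)%N)
      (csinh (lam (sg j) - xi k + eps s (sg j) * izeta zeta)
       * csinh (lam (sg k) - xi j - eps s (sg k) * izeta zeta)
       / csinh (lam (sg j) - lam (sg k) + (eps s (sg j) + eps s (sg k)) * izeta zeta))).

(* tilde G_s(m, {lam} | {xi}), defined from
   G_s = 1/(s!(m-s)!) * prod_{k<j} sinh(l_j-l_k) /
         (sinh(l_j-l_k+i(e_j+e_k)z) sinh(l_j-l_k-i(e_j+e_k)z)) * tilde G_s ,
   valid wherever the denominators do not vanish (see [generic]). *)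
Definition tGs (zeta : R) (s m : nat) (lam xi : nat -> C) : C :=
  ((s`! * (m - s)`!)%N)%:R * Gs zeta s m lam xi *
  \prod_(k < m) \prod_(j < m | (k < j)%N)
    (csinh (lam j - lam k + (eps s j + eps s k) * izeta zeta)
     * csinh (lam j - lam k - (eps s j + eps s k) * izeta zeta)
     / csinh (lam j - lam k)).

Definition generic (zeta : R) (s m : nat) (lam : nat -> C) : Prop :=
  forall a b : nat, (a < m)%N -> (b < m)%N -> a <> b ->
    csinh (lam a - lam b) <> 0 /\
    csinh (lam a - lam b + (eps s a + eps s b) * izeta zeta) <> 0.

Definition hat (j : nat) (f : nat -> C) : nat -> C :=
  fun a => if (a < j)%N then f a else f a.+1.

End Defs.

(* Main.v *)
Require Import Defs.
From mathcomp Require Import all_boot all_order all_algebra all_fingroup.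
From mathcomp Require Import reals sequences exp trigo.
From mathcomp Require Import complex.
From mathcomp Require Import ring zify.
From Stdlib Require Import FunctionalExtensionality.
Import Order.TTheory GRing.Theory Num.Theory.
Local Open Scope ring_scope.
Local Open Scope complex_scope.
Set Implicit Arguments. Unset Strict Implicit. Unset Printing Implicit Defensive.


Section Csinh.
Variable R : realType.
Local Notation C := R[i].

Lemma cexpD (z w : C) : cexp (z + w) = cexp z * cexp w.
Proof.
case: z => a b; case: w => c d.
rewrite /cexp /= expRD cosD sinD.
apply/eqP; rewrite eq_complex /=. apply/andP; split; apply/eqP; ring.
Qed.

Lemma cexp0 : cexp (0 : C) = 1.
Proof. by rewrite /cexp /= expR0 cos0 sin0 mul1r mulr0. Qed.

Lemma cexpNK (z : C) : cexp z * cexp (- z) = 1.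
Proof. by rewrite -cexpD subrr cexp0. Qed.

Lemma cexp_neq0 (z : C) : cexp z != 0.
Proof. apply/negP => /eqP H; have := cexpNK z; rewrite H mul0r => /eqP; by rewrite eq_sym oner_eq0. Qed.

Lemma cexpN (z : C) : cexp (- z) = (cexp z)^-1.
Proof. apply: (mulfI (cexp_neq0 z)); by rewrite cexpNK mulfV ?cexp_neq0. Qed.

Lemma cexpB (z w : C) : cexp (z - w) = cexp z / cexp w.
Proof. by rewrite cexpD cexpN. Qed.

Lemma csinhE (z : C) : csinh z = (cexp z - (cexp z)^-1) / 2.
Proof. by rewrite /csinh cexpN. Qed.

Lemma csinhN (z : C) : csinh (- z) = - csinh z.
Proof. rewrite !csinhE cexpN invrK. by rewrite -mulNr opprB. Qed.

Lemma csinh0 : csinh (0 : C) = 0.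
Proof. by rewrite csinhE cexp0 invr1 subrr mul0r. Qed.

Lemma two_neq0 : (2 : C) != 0.
Proof. by rewrite pnatr_eq0. Qed.

Lemma csinh4 (A B x y : C) :
  csinh (A - x) * csinh (B - y) - csinh (A - y) * csinh (B - x)
  = csinh (A - B) * csinh (x - y).
Proof.
rewrite !csinhE !cexpB.
have hA := cexp_neq0 A; have hB := cexp_neq0 B.
have hx := cexp_neq0 x; have hy := cexp_neq0 y. have h2 := two_neq0.
field; by rewrite ?hA ?hB ?hx ?hy ?h2.
Qed.

End Csinh.

Section Sym.
Variable R : realType.
Local Notation C := R[i].
Variable m : nat.
Variables (f g : nat -> C -> C) (h : nat -> nat -> C).

Definition PT (X : 'I_m -> C) (sg : 'S_m) : C :=
  \prod_(k < m) \prod_(j < m | (k < j)%N)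
    (f (sg j) (X k) * g (sg k) (X j) / h (sg j) (sg k)).

Definition Fp (X : 'I_m -> C) (sg : 'S_m) (p : 'I_m * 'I_m) :=
  f (sg p.2) (X p.1) * g (sg p.1) (X p.2) / h (sg p.2) (sg p.1).

Lemma PT_pair X sg : PT X sg = \prod_(p : 'I_m * 'I_m | (p.1 < p.2)%N) Fp X sg p.
Proof. by rewrite /PT pair_big_dep. Qed.

Variables (i0 i1 : 'I_m).
Hypothesis Hi : val i1 = (val i0).+1.
Local Notation t := (tperm i0 i1).

Lemma tpval (a : 'I_m) : val (t a) =
  if val a == val i0 then val i1 else if val a == val i1 then val i0 else val a.
Proof.
case: tpermP => [->|->|H1 H2]; rewrite ?eqxx //.
- by rewrite Hi (_ : ((val i0).+1 == val i0) = false) ?eqxx //; lia.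
- have /negbTE -> : val a != val i0 by apply/eqP => /val_inj.
  by have /negbTE -> : val a != val i1 by apply/eqP => /val_inj.
Qed.

Lemma tpvalN (a : 'I_m) : nat_of_ord (t a) =
  if nat_of_ord a == nat_of_ord i0 then nat_of_ord i1
  else if nat_of_ord a == nat_of_ord i1 then nat_of_ord i0 else nat_of_ord a.
Proof. exact: tpval. Qed.

Definition Pq (p : 'I_m * 'I_m) :=
  (p.1 < p.2)%N && ~~ ((val p.1 == val i0) && (val p.2 == val i1)).

Lemma Pq_t1 p : Pq (t p.1, p.2) = Pq p.
Proof.
rewrite /Pq /= tpval; move: Hi; case: p => [[a ?] [b ?]] /=.
case: i0 i1 => [c ?] [d ?] /= ->.
by case: (a =P c) => ?; case: (a =P c.+1) => ?; case: (b =P c.+1) => ? /=; lia.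
Qed.

Lemma Pq_t2 p : Pq (p.1, t p.2) = Pq p.
Proof.
rewrite /Pq /= tpval; move: Hi; case: p => [[a ?] [b ?]] /=.
case: i0 i1 => [c ?] [d ?] /= ->.
by case: (b =P c) => ?; case: (b =P c.+1) => ?; case: (a =P c) => ? /=; lia.
Qed.

Lemma Pq_t12 p : Pq (t p.1, t p.2) = Pq p.
Proof.
rewrite /Pq /= !tpval; move: Hi; case: p => [[a ?] [b ?]] /=.
case: i0 i1 => [c ?] [d ?] /= ->.
by case: (a =P c) => ?; case: (a =P c.+1) => ?; case: (b =P c) => ?;
   case: (b =P c.+1) => ? /=; lia.
Qed.

Lemma reidx (gg : 'I_m * 'I_m -> 'I_m * 'I_m) (F : 'I_m * 'I_m -> C) :
  involutive gg -> (forall p, Pq (gg p) = Pq p) ->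
  \prod_(p | Pq p) F (gg p) = \prod_(p | Pq p) F p.
Proof.
move=> inv hP; rewrite [RHS](reindex_inj (inv_inj inv)).
by apply: eq_bigl => p; rewrite hP.
Qed.

Lemma inv1 : involutive (fun p : 'I_m * 'I_m => (t p.1, p.2)).
Proof. by case=> a b /=; rewrite tpermK. Qed.
Lemma inv2 : involutive (fun p : 'I_m * 'I_m => (p.1, t p.2)).
Proof. by case=> a b /=; rewrite tpermK. Qed.
Lemma inv12 : involutive (fun p : 'I_m * 'I_m => (t p.1, t p.2)).
Proof. by case=> a b /=; rewrite !tpermK. Qed.

Lemma split3 (A B D : 'I_m * 'I_m -> C) :
  \prod_(p | Pq p) (A p * B p / D p) =
  (\prod_(p | Pq p) A p) * (\prod_(p | Pq p) B p) / (\prod_(p | Pq p) D p).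
Proof. by rewrite !big_split /= prodfV. Qed.

Lemma Q_sg X sg : \prod_(p | Pq p) Fp X (t * sg)%g p = \prod_(p | Pq p) Fp X sg p.
Proof.
rewrite /Fp split3 [RHS]split3.
under eq_bigr do rewrite permM.
under [X in _ * X / _]eq_bigr do rewrite permM.
under [X in _ / X]eq_bigr do rewrite !permM.
rewrite (reidx (fun p => f (sg p.2) (X p.1)) inv2 Pq_t2).
rewrite (reidx (fun p => g (sg p.1) (X p.2)) inv1 Pq_t1).
by rewrite (reidx (fun p => h (sg p.2) (sg p.1)) inv12 Pq_t12).
Qed.

Lemma Q_X X sg : \prod_(p | Pq p) Fp (fun k => X (t k)) sg p = \prod_(p | Pq p) Fp X sg p.
Proof.
rewrite /Fp split3 [RHS]split3.
rewrite (reidx (fun p => f (sg p.2) (X p.1)) inv1 Pq_t1).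
by rewrite (reidx (fun p => g (sg p.1) (X p.2)) inv2 Pq_t2).
Qed.

Lemma i01 : (i0 < i1)%N. Proof. by rewrite Hi. Qed.

Lemma PT_split X sg : PT X sg = Fp X sg (i0, i1) * \prod_(p | Pq p) Fp X sg p.
Proof.
rewrite PT_pair (bigD1 (i0, i1)) /= ?i01 //; congr (_ * _).
Qed.

Hypothesis H : forall x y (a b : 'I_m), a != b ->
  f a x * g b y / h a b - f a y * g b x / h a b
  = f b x * g a y / h b a - f b y * g a x / h b a.

Lemma PT_sym (X : 'I_m -> C) :
  \sum_(sg : 'S_m) (-1) ^+ sg * PT X sg =
  \sum_(sg : 'S_m) (-1) ^+ sg * PT (fun k => X (t k)) sg.
Proof.
apply/eqP; rewrite -subr_eq0 -sumrB; apply/eqP.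
pose D := fun sg : 'S_m => (-1) ^+ sg * PT X sg - (-1) ^+ sg * PT (fun k => X (t k)) sg.
rewrite -/(\sum_sg D sg).
have HD sg : D (t * sg)%g = - D sg.
  rewrite /D -!mulrBr !PT_split Q_X Q_sg Q_X.
  rewrite odd_permM odd_tperm signr_addb.
  have -> : i0 != i1 by rewrite -val_eqE Hi neq_ltn ltnSn.
  rewrite -!mulrBl expr1 mulN1r mulNr; congr (- (_ * (_ * _))).
  rewrite /Fp /= !permM tpermL tpermR.
  rewrite !mulrBl; apply: H; apply/negP => /eqP /perm_inj /(congr1 val) /= E; move: E; rewrite Hi; case: (i0) => a ha /=; lia.
have : \sum_sg D sg = - \sum_sg D sg.
  by rewrite {1}(reindex_inj (mulgI t)) /= -sumrN; apply: eq_bigr => s _; rewrite HD.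
move/eqP; rewrite -subr_eq0 opprK -mulr2n -mulr_natr mulf_eq0 pnatr_eq0 orbF.
by move/eqP.
Qed.

End Sym.

Section Main.
Variable R : realType.
Local Notation C := R[i].
Variable zeta : R.
Local Notation iz := (izeta zeta).

Definition fp s (lam : nat -> C) (a : nat) (x : C) := csinh (lam a - x + @eps R s a * iz).
Definition gp s (lam : nat -> C) (a : nat) (y : C) := csinh (lam a - y - @eps R s a * iz).
Definition hp s (lam : nat -> C) (b a : nat) := csinh (lam b - lam a + (@eps R s b + @eps R s a) * iz).

Definition SG s m (lam xi : nat -> C) :=
  \sum_(sg : 'S_m) (-1) ^+ sg * PT (fp s lam) (gp s lam) (hp s lam) (fun k : 'I_m => xi k) sg.

Definition Ufun s (lam : nat -> C) (k j : nat) :=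
  csinh (lam j - lam k + (@eps R s j + @eps R s k) * iz) *
  csinh (lam j - lam k - (@eps R s j + @eps R s k) * iz) / csinh (lam j - lam k).

Definition UP s m (lam : nat -> C) :=
  \prod_(k < m) \prod_(j < m | (k < j)%N) Ufun s lam k j.

Lemma tGsE s m lam xi : tGs zeta s m lam xi = SG s m lam xi * UP s m lam.
Proof.
rewrite /tGs /Gs mulrA mulfV ?mul1r //.
by rewrite pnatr_eq0 muln_eq0 negb_or -!lt0n !fact_gt0.
Qed.

Definition swapf k (xi : nat -> C) (a : nat) :=
  if a == k then xi k.+1 else if a == k.+1 then xi k else xi a.

Lemma key (la lb ea eb x y : C) :
  csinh (la - lb + (ea + eb) * iz) != 0 ->
  (csinh (la - x + ea * iz) * csinh (lb - y - eb * iz)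
   - csinh (la - y + ea * iz) * csinh (lb - x - eb * iz))
  / csinh (la - lb + (ea + eb) * iz) = csinh (x - y).
Proof.
move=> nz; have := csinh4 (la + ea * iz) (lb - eb * iz) x y.
have -> : la + ea * iz - x = la - x + ea * iz by ring.
have -> : la + ea * iz - y = la - y + ea * iz by ring.
have -> : lb - eb * iz - x = lb - x - eb * iz by ring.
have -> : lb - eb * iz - y = lb - y - eb * iz by ring.
have -> : la + ea * iz - (lb - eb * iz) = la - lb + (ea + eb) * iz by ring.
by move=> ->; rewrite mulrAC mulfV ?mul1r.
Qed.

Lemma tGs_swap s m lam xi k :
  generic zeta s m lam -> (k.+1 < m)%N ->
  tGs zeta s m lam xi = tGs zeta s m lam (swapf k xi).
Proof.
move=> gen hk; rewrite !tGsE; congr (_ * _).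
have hk0 : (k < m)%N by lia.
pose i0 := Ordinal hk0; pose i1 := Ordinal hk.
have Hi : val i1 = (val i0).+1 by [].
rewrite /SG (PT_sym Hi) //.
  apply: eq_bigr => sg _; congr (_ * PT _ _ _ _ sg).
  apply: functional_extensionality => a.
  rewrite (tpvalN Hi) /swapf /=.
  by case: eqP => // _; case: eqP.
move=> x y a b ab.
have nz (c d : 'I_m) : c != d -> hp s lam c d != 0.
  move=> cd; have neq : (c : nat) <> d by move=> /val_inj E; move: cd; rewrite E eqxx.
  by have [_ /eqP] := gen c d (ltn_ord c) (ltn_ord d) neq.
rewrite -!mulrBl /fp /gp /hp !key //; first by apply: nz; rewrite eq_sym.
exact: nz.
Qed.

End Main.

Section Main2.
Variable R : realType.
Local Notation C := R[i].
Variable zeta : R.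
Local Notation iz := (izeta zeta).

Lemma hat_bump j (f : nat -> C) x : hat j f x = f (bump j x).
Proof. by rewrite /hat /bump; case: (ltnP x j) => H /=; rewrite ?add0n ?add1n. Qed.

Lemma bump_lt j a b : (bump j a < bump j b)%N = (a < b)%N.
Proof. rewrite /bump; case: (leqP j a); case: (leqP j b) => /= ? ?; lia. Qed.

Lemma UP_split s s' n (j : 'I_n.+1) (lam : nat -> C) :
  (forall x, @eps R s (bump j x) = @eps R s' x) ->
  UP zeta s n.+1 lam =
  (\prod_(a < n) (if (lift j a < j)%N then Ufun zeta s lam (lift j a) j
                  else Ufun zeta s lam j (lift j a))) * UP zeta s' n (hat j lam).
Proof.
move=> He; rewrite /UP.
under eq_bigr => k _ do rewrite big_mkcond /=.
rewrite (bigD1_ord j) //= (bigD1_ord j) //= ltnn mul1r.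
under [X in _ * X]eq_bigr => k _ do rewrite (bigD1_ord j) //=.
rewrite big_split /= mulrA -big_split /=.
congr (_ * _).
  apply: eq_bigr => a _; have := neq_lift j a; rewrite -val_eqE /=.
  by case: ltngtP => //= _ _; rewrite ?mulr1 ?mul1r.
apply: eq_bigr => k _; rewrite [RHS]big_mkcond; apply: eq_bigr => l _.
have -> : (lift j k < lift j l)%N = (k < l)%N by exact: bump_lt.
case: ifP => // _; rewrite /Ufun !hat_bump -!He //.
Qed.

Lemma fp_hat s s' j (lam : nat -> C) a x : (forall y, @eps R s (bump j y) = @eps R s' y) ->
  fp zeta s' (hat j lam) a x = fp zeta s lam (bump j a) x.
Proof. by move=> He; rewrite /fp hat_bump He. Qed.
Lemma gp_hat s s' j (lam : nat -> C) a x : (forall y, @eps R s (bump j y) = @eps R s' y) ->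
  gp zeta s' (hat j lam) a x = gp zeta s lam (bump j a) x.
Proof. by move=> He; rewrite /gp hat_bump He. Qed.
Lemma hp_hat s s' j (lam : nat -> C) a b : (forall y, @eps R s (bump j y) = @eps R s' y) ->
  hp zeta s' (hat j lam) a b = hp zeta s lam (bump j a) (bump j b).
Proof. by move=> He; rewrite /hp !hat_bump !He. Qed.

Lemma reindex_lift n (i0 j0 : 'I_n.+1) (F : 'S_n.+1 -> C) :
  \sum_(sg : 'S_n.+1 | sg i0 == j0) F sg = \sum_(rho : 'S_n) F (lift_perm i0 j0 rho).
Proof.
rewrite (reindex (lift_perm i0 j0)); last first.
  pose ulsf i (s : 'S_n.+1) k := odflt k (unlift (s i) (s (lift i k))).
  have ulsfK i (s : 'S_n.+1) k: lift (s i) (ulsf i s k) = s (lift i k).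
    rewrite /ulsf; have:= neq_lift i k.
    by rewrite -(can_eq (permK s)) => /unlift_some[] ? ? ->.
  have inj_ulsf: injective (ulsf i0 _).
    move=> s; apply: can_inj (ulsf (s i0) s^-1%g) _ => k'.
    by rewrite {1}/ulsf ulsfK !permK liftK.
  exists (fun s => perm (inj_ulsf s)) => [s _ | s].
    by apply/permP=> k'; rewrite permE /ulsf lift_perm_lift lift_perm_id liftK.
  move/(s _ =P _) => si0; apply/permP=> k.
  case: (unliftP i0 k) => [k'|] ->; rewrite ?lift_perm_id //.
  by rewrite lift_perm_lift -si0 permE ulsfK.
by apply: eq_bigl => rho; rewrite lift_perm_id eqxx.
Qed.

Lemma SG_plus s n (j : 'I_n.+1) (lam xi : nat -> C) :
  (forall x, @eps R s (bump j x) = @eps R s x) ->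
  fp zeta s lam j (xi 0%N) = 0 ->
  SG zeta s n.+1 lam xi =
  (-1) ^+ j * \prod_(q < n) gp zeta s lam j (xi q.+1) *
  \prod_(a < n) (fp zeta s lam (lift j a) (xi 0%N) / hp zeta s lam (lift j a) j) *
  SG zeta s n (hat j lam) (hat 0 xi).
Proof.
move=> He h0.
rewrite /SG (bigID (fun sg : 'S_n.+1 => sg ord0 == j)) /=.
rewrite [X in _ + X]big1 ?addr0; last first.
  move=> sg hsg; pose p := (sg^-1)%g j.
  have hp0 : (0 < p)%N.
    rewrite lt0n; apply/negP => /eqP E0.
    have E : p = ord0 by apply: val_inj.
    by move: hsg; rewrite -E permKV eqxx.
  rewrite /PT (bigD1 ord0) //= (bigD1 p) //=.
  have -> : fp zeta s lam (sg p) (xi (@ord0 n)) = 0 by rewrite permKV.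
  by rewrite !mul0r mulr0.
rewrite reindex_lift big_distrr /=.
apply: eq_bigr => rho _.
rewrite odd_lift_perm signr_addb signr_addb.
have -> : odd (@ord0 n) = false by [].
rewrite expr0 mul1r signr_odd.
set sg := lift_perm ord0 j rho.
have sg0 : sg ord0 = j by exact: lift_perm_id.
have sgl q : sg (lift ord0 q) = lift j (rho q) by exact: lift_perm_lift.
have row0 : \prod_(l < n.+1 | (@ord0 n < l)%N)
    (fp zeta s lam (sg l) (xi (@ord0 n)) * gp zeta s lam (sg ord0) (xi l) / hp zeta s lam (sg l) (sg ord0))
   = (\prod_(q < n) gp zeta s lam j (xi q.+1)) *
     (\prod_(a < n) (fp zeta s lam (lift j a) (xi 0%N) / hp zeta s lam (lift j a) j)).
  rewrite big_mkcond big_ord_recl /= mul1r.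
  under eq_bigr => q _ do rewrite sg0 sgl mulrAC.
  have E : \prod_(q < n) gp zeta s lam j (xi (bump 0 q)) = \prod_(q < n) gp zeta s lam j (xi q.+1).
    by apply: eq_bigr => q _; rewrite /bump add1n.
  rewrite big_split mulrC E; congr (_ * _).
  by rewrite [RHS](reindex_inj (@perm_inj _ rho)).
have rows : \prod_(k < n) \prod_(l < n.+1 | (lift ord0 k < l)%N)
    (fp zeta s lam (sg l) (xi (lift ord0 k)) * gp zeta s lam (sg (lift ord0 k)) (xi l)
      / hp zeta s lam (sg l) (sg (lift ord0 k)))
   = PT (fp zeta s (hat j lam)) (gp zeta s (hat j lam)) (hp zeta s (hat j lam))
       (fun k : 'I_n => hat 0 xi k) rho.
  rewrite /PT; apply: eq_bigr => k _.
  rewrite big_mkcond big_ord_recl /= mul1r [RHS]big_mkcond; apply: eq_bigr => l _.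
  have -> : (lift ord0 k < lift ord0 l)%N = (k < l)%N by [].
  case: ifP => // _.
  by rewrite !sgl (fp_hat _ _ _ He) (gp_hat _ _ _ He) (hp_hat _ _ _ He).
have Eb : \prod_(a < n) (fp zeta s lam (bump j a) (xi 0%N) / hp zeta s lam (bump j a) j)
  = \prod_(a < n) (fp zeta s lam (lift j a) (xi 0%N) / hp zeta s lam (lift j a) j) by [].
rewrite Eb [PT (fp zeta s lam) _ _ _ sg]/PT big_ord_recl row0 rows.
move: (\prod_(q < n) _) (\prod_(a < n) _) (PT _ _ _ _ rho) ((-1) ^+ j) ((-1) ^+ rho) => A B P sj sr.
ring.
Qed.

Lemma SG_minus s s' n (j : 'I_n.+1) (lam xi : nat -> C) :
  (forall x, @eps R s (bump j x) = @eps R s' x) ->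
  gp zeta s lam j (xi n) = 0 ->
  SG zeta s n.+1 lam xi =
  (-1) ^+ n * (-1) ^+ j * (\prod_(q < n) fp zeta s lam j (xi q)) *
  (\prod_(a < n) (gp zeta s lam (lift j a) (xi n) / hp zeta s lam j (lift j a))) *
  SG zeta s' n (hat j lam) (hat n xi).
Proof.
move=> He h0.
rewrite /SG (bigID (fun sg : 'S_n.+1 => sg ord_max == j)) /=.
rewrite [X in _ + X]big1 ?addr0; last first.
  move=> sg hsg; pose p := (sg^-1)%g j.
  have hpn : (p < n)%N.
    have := ltn_ord p; rewrite ltnS leq_eqVlt => /orP [/eqP E0|//].
    have E : p = ord_max by apply: val_inj.
    by move: hsg; rewrite -E permKV eqxx.
  rewrite /PT (bigD1 p) //= (bigD1 ord_max) //=.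
  have -> : gp zeta s lam (sg p) (xi (@ord_max n)) = 0 by rewrite permKV.
  by rewrite mulr0 !mul0r mulr0.
rewrite reindex_lift big_distrr /=.
apply: eq_bigr => rho _.
rewrite odd_lift_perm signr_addb signr_addb.
have -> : odd (@ord_max n) = odd n by [].
rewrite !signr_odd.
set sg := lift_perm ord_max j rho.
have sgm : sg ord_max = j by exact: lift_perm_id.
have sgl q : sg (lift ord_max q) = lift j (rho q) by exact: lift_perm_lift.
have wl q : widen_ord (leqnSn n) q = lift ord_max q by apply: val_inj; exact: (esym (lift_max q)).
have Gmax : \prod_(l < n.+1 | (@ord_max n < l)%N)
    (fp zeta s lam (sg l) (xi (@ord_max n)) * gp zeta s lam (sg ord_max) (xi l)
     / hp zeta s lam (sg l) (sg ord_max)) = 1.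
  by rewrite big_pred0 // => l; rewrite ltnNge -ltnS ltn_ord.
have rows : \prod_(k < n) \prod_(l < n.+1 | (widen_ord (leqnSn n) k < l)%N)
    (fp zeta s lam (sg l) (xi (widen_ord (leqnSn n) k)) *
     gp zeta s lam (sg (widen_ord (leqnSn n) k)) (xi l)
      / hp zeta s lam (sg l) (sg (widen_ord (leqnSn n) k)))
   = (\prod_(q < n) fp zeta s lam j (xi q)) *
     (\prod_(a < n) (gp zeta s lam (lift j a) (xi n) / hp zeta s lam j (lift j a))) *
     PT (fp zeta s' (hat j lam)) (gp zeta s' (hat j lam)) (hp zeta s' (hat j lam))
       (fun k : 'I_n => hat n xi k) rho.
  under eq_bigr => k _ do rewrite big_mkcond big_ord_recr /=.
  rewrite big_split mulrC; congr (_ * _).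
    rewrite /PT; apply: eq_bigr => k _.
    rewrite [RHS]big_mkcond; apply: eq_bigr => l _.
    case: ifP => // _.
    rewrite !wl !sgl (fp_hat _ _ _ He) (gp_hat _ _ _ He) (hp_hat _ _ _ He).
    by rewrite /hat !ltn_ord.
  under eq_bigr => k _ do rewrite ltn_ord sgm wl sgl -mulrA.
  rewrite big_split; congr (_ * _).
  by rewrite [RHS](reindex_inj (@perm_inj _ rho)).
have Eb : \prod_(a < n) (gp zeta s lam (bump j a) (xi n) / hp zeta s lam j (bump j a))
  = \prod_(a < n) (gp zeta s lam (lift j a) (xi n) / hp zeta s lam j (lift j a)) by [].
rewrite ?Eb [PT (fp zeta s lam) _ _ _ sg]/PT big_ord_recr Gmax Monoid.mulm1 rows.
move: (\prod_(q < n) _) (\prod_(a < n) _) (PT _ _ _ _ rho) ((-1) ^+ j) ((-1) ^+ rho) ((-1) ^+ n) => A B P sj sr sn.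
ring.
Qed.

End Main2.

Section Main3.
Variable R : realType.
Local Notation C := R[i].
Variable zeta : R.
Local Notation iz := (izeta zeta).

Lemma eps_cases s a : @eps R s a = 1/2 \/ @eps R s a = - (1/2).
Proof. by rewrite /eps; case: ifP; [right | left]. Qed.

Lemma UfunC s (lam : nat -> C) k l : Ufun zeta s lam k l = - Ufun zeta s lam l k.
Proof.
rewrite /Ufun.
have -> : lam l - lam k + (@eps R s l + @eps R s k) * iz
  = - (lam k - lam l - (@eps R s k + @eps R s l) * iz) by ring.
have -> : lam l - lam k - (@eps R s l + @eps R s k) * iz
  = - (lam k - lam l + (@eps R s k + @eps R s l) * iz) by ring.
have -> : lam l - lam k = - (lam k - lam l) by ring.
rewrite !csinhN mulrNN invrN mulrN; congr (- (_ / _)); exact: mulrC.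
Qed.

Lemma sign_prod n j : (j <= n)%N ->
  \prod_(a < n) (if (a < j)%N then -1 else 1) = (-1) ^+ j :> C.
Proof.
elim: n j => [|n IH] j hj.
  by rewrite big_ord0; move: hj; rewrite leqn0 => /eqP ->.
rewrite big_ord_recr /=.
case: (ltnP n j) => h.
  have ej : j = n.+1 by apply/eqP; rewrite eqn_leq hj h.
  rewrite ej exprSr; congr (_ * _).
  rewrite -(IH n (leqnn n)); apply: eq_bigr => i _.
  by rewrite (ltn_ord i) (ltn_trans (ltn_ord i) (ltnSn n)).
by rewrite IH // ?mulr1 ?Monoid.mulm1.
Qed.

Lemma elem_plus (la lj x ea : C) : (ea = 1/2 \/ ea = - (1/2)) -> lj = x - iz / 2 ->
  csinh (la - lj) != 0 -> csinh (la - lj + (ea + 1/2) * iz) != 0 ->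
  csinh (la - x + ea * iz) / csinh (la - lj + (ea + 1/2) * iz) *
  (csinh (la - lj + (ea + 1/2) * iz) * csinh (la - lj - (ea + 1/2) * iz) / csinh (la - lj))
  = csinh (la - x - iz / 2).
Proof.
move=> hea hlj h1 h2.
move: (csinh (la - lj + (ea + 1/2) * iz)) h2 => D h2.
case: hea => hea.
  have -> : csinh (la - x + ea * iz) = csinh (la - lj) by congr csinh; rewrite hea hlj; ring.
  have -> : csinh (la - lj - (ea + 1/2) * iz) = csinh (la - x - iz / 2) by congr csinh; rewrite hea hlj; ring.
  move: (csinh (la - lj)) (csinh (la - x - iz / 2)) h1 => u Z h1.
  by field; rewrite h1 h2.
have -> : csinh (la - x + ea * iz) = csinh (la - x - iz / 2) by congr csinh; rewrite hea; ring.
have -> : csinh (la - lj - (ea + 1/2) * iz) = csinh (la - lj) by congr csinh; rewrite hea; ring.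
move: (csinh (la - lj)) (csinh (la - x - iz / 2)) h1 => u Z h1.
by field; rewrite h1 h2.
Qed.
Lemma elem_minus (la lj x ea : C) : (ea = 1/2 \/ ea = - (1/2)) -> lj = x - iz / 2 ->
  csinh (la - lj) != 0 -> csinh (lj - la + (- (1/2) + ea) * iz) != 0 ->
  csinh (la - x - ea * iz) / csinh (lj - la + (- (1/2) + ea) * iz) *
  (csinh (la - lj + (ea + - (1/2)) * iz) * csinh (la - lj - (ea + - (1/2)) * iz) / csinh (la - lj))
  = - csinh (la - x - iz / 2).
Proof.
move=> hea hlj h1 h2.
have E : csinh (lj - la + (- (1/2) + ea) * iz) = - csinh (la - lj - (ea + - (1/2)) * iz).
  by rewrite -csinhN; congr csinh; ring.
rewrite E in h2 *; rewrite oppr_eq0 in h2.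
move: (csinh (la - lj - (ea + - (1/2)) * iz)) h2 => D h2.
case: hea => hea.
  have -> : csinh (la - x - ea * iz) = csinh (la - x - iz / 2) by congr csinh; rewrite hea; ring.
  have -> : csinh (la - lj + (ea + - (1/2)) * iz) = csinh (la - lj) by congr csinh; rewrite hea; ring.
  move: (csinh (la - lj)) (csinh (la - x - iz / 2)) h1 => u Z h1.
  by field; rewrite h1 h2.
have -> : csinh (la - x - ea * iz) = csinh (la - lj) by congr csinh; rewrite hea hlj; ring.
have -> : csinh (la - lj + (ea + - (1/2)) * iz) = csinh (la - x - iz / 2) by congr csinh; rewrite hea hlj; ring.
move: (csinh (la - lj)) (csinh (la - x - iz / 2)) h1 => u Z h1.
by field; rewrite h1 h2.
Qed.

Lemma alg_plus (sj P1 P2 Pw Pv S U : C) : sj * sj = 1 -> Pw * Pv = sj * P2 ->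
  sj * P1 * Pw * S * (Pv * U) = P1 * P2 * (S * U).
Proof.
move=> h1 h2; transitivity (sj * P1 * (Pw * Pv) * S * U); first by ring.
rewrite h2; transitivity ((sj * sj) * P1 * P2 * S * U); first by ring.
by rewrite h1; ring.
Qed.

Lemma alg_minus (sn sj P1 P2 Pw Pv S U : C) : sn * sn = 1 -> sj * sj = 1 ->
  Pw * Pv = sj * sn * P2 ->
  sn * sj * P1 * Pw * S * (Pv * U) = P1 * P2 * (S * U).
Proof.
move=> h0 h1 h2; transitivity (sn * sj * P1 * (Pw * Pv) * S * U); first by ring.
rewrite h2; transitivity ((sn * sn) * (sj * sj) * P1 * P2 * S * U); first by ring.
by rewrite h0 h1; ring.
Qed.

Lemma sgn_sq k : (-1) ^+ k * (-1) ^+ k = 1 :> C.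
Proof. by rewrite -expr2 sqrr_sign. Qed.

Lemma gen_nz s m (lam : nat -> C) a b : generic zeta s m lam -> (a < m)%N -> (b < m)%N -> a <> b ->
  csinh (lam a - lam b) != 0 /\ csinh (lam a - lam b + (@eps R s a + @eps R s b) * iz) != 0.
Proof. by move=> gen ha hb ab; have [/eqP h1 /eqP h2] := gen a b ha hb ab. Qed.

Lemma bump_ltj (j a : nat) : (bump j a < j)%N = (a < j)%N.
Proof. rewrite /bump; case: (leqP j a) => h /=; lia. Qed.

Lemma base_plus s n (j : 'I_n.+1) (lam xi : nat -> C) :
  (s <= j)%N -> lam j = xi 0%N - iz / 2 -> generic zeta s n.+1 lam ->
  tGs zeta s n.+1 lam xi =
  (\prod_(a < n.+1 | a != 0%N :> nat) csinh (lam j - xi a - iz / 2)) *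
  (\prod_(a < n.+1 | a != j :> nat) csinh (lam a - xi 0%N - iz / 2)) *
  tGs zeta s n (hat j lam) (hat 0 xi).
Proof.
move=> hsj hlam gen.
have He x : @eps R s (bump j x) = @eps R s x.
  rewrite /eps /bump; case: (leqP j x) => h /=; last by rewrite add0n.
  rewrite add1n; have -> : (x.+1 < s)%N = false by lia.
  by have -> : (x < s)%N = false by lia.
have epsj : @eps R s j = 1/2 by rewrite /eps ltnNge hsj.
have h0 : fp zeta s lam j (xi 0%N) = 0.
  rewrite /fp epsj hlam; transitivity (csinh (0 : C)); last exact: csinh0.
  by congr csinh; ring.
rewrite !tGsE (SG_plus He h0) (UP_split zeta lam He).
have e1 : \prod_(q < n) gp zeta s lam j (xi q.+1) =
          \prod_(a < n.+1 | a != 0%N :> nat) csinh (lam j - xi a - iz / 2).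
  rewrite [RHS]big_mkcond big_ord_recl /= mul1r; apply: eq_bigr => q _.
  rewrite /gp epsj; have -> : xi (@lift n.+1 ord0 q) = xi q.+1 by [].
  by congr csinh; ring.
rewrite e1; apply: alg_plus; first exact: sgn_sq.
rewrite -big_split /= [X in _ = _ * X]big_mkcond (bigD1_ord j) //= eqxx mul1r.
rewrite -(sign_prod (n := n) (ltn_ord j)) -big_split; apply: eq_bigr => a _.
have ne : bump j a != j by have := neq_lift j a; rewrite eq_sym -val_eqE.
rewrite ne bump_ltj.
have [h1 h2] := gen_nz gen (ltn_ord (lift j a)) (ltn_ord j) (elimN eqP ne).
rewrite epsj in h2.
have EL : fp zeta s lam (bump j a) (xi 0%N) / hp zeta s lam (bump j a) j *
   Ufun zeta s lam j (bump j a) = csinh (lam (bump j a) - xi 0%N - iz / 2).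
  rewrite /fp /hp /Ufun epsj.
  exact: (elem_plus (eps_cases s (bump j a)) hlam h1 h2).
case: (a < j)%N.
  by rewrite UfunC mulrN EL; exact: (esym (mulN1r _)).
by rewrite EL; exact: (esym (mul1r _)).
Qed.

End Main3.

Section Main4.
Variable R : realType.
Local Notation C := R[i].
Variable zeta : R.
Local Notation iz := (izeta zeta).

Lemma base_minus s n (j : 'I_n.+1) (lam xi : nat -> C) :
  (j < s)%N -> lam j = xi n - iz / 2 -> generic zeta s n.+1 lam ->
  tGs zeta s n.+1 lam xi =
  (\prod_(a < n.+1 | a != n :> nat) csinh (lam j - xi a - iz / 2)) *
  (\prod_(a < n.+1 | a != j :> nat) csinh (lam a - xi n - iz / 2)) *
  tGs zeta s.-1 n (hat j lam) (hat n xi).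
Proof.
move=> hsj hlam gen.
have He x : @eps R s (bump j x) = @eps R s.-1 x.
  rewrite /eps /bump; case: (leqP j x) => h /=.
    rewrite add1n; have -> : (x.+1 < s)%N = (x < s.-1)%N by lia. by [].
  rewrite add0n; have -> : (x < s)%N = true by lia.
  by have -> : (x < s.-1)%N = true by lia.
have epsj : @eps R s j = - (1/2) by rewrite /eps hsj.
have h0 : gp zeta s lam j (xi n) = 0.
  rewrite /gp epsj hlam; transitivity (csinh (0 : C)); last exact: csinh0.
  by congr csinh; ring.
rewrite !tGsE (SG_minus He h0) (UP_split zeta lam He).
have e1 : \prod_(q < n) fp zeta s lam j (xi q) =
          \prod_(a < n.+1 | a != n :> nat) csinh (lam j - xi a - iz / 2).
  rewrite [RHS]big_mkcond big_ord_recr /= eqxx Monoid.mulm1; apply: eq_bigr => q _.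
  have -> : (widen_ord (leqnSn n) q != n :> nat) = true by rewrite /= neq_ltn ltn_ord.
  rewrite /fp epsj.
  by congr csinh; ring.
rewrite e1; apply: alg_minus; [exact: sgn_sq | exact: sgn_sq |].
rewrite -big_split /= [X in _ = _ * X]big_mkcond (bigD1_ord j) //= eqxx mul1r.
have sn : (-1) ^+ n = \prod_(a < n) (-1 : C) by rewrite prodr_const card_ord.
rewrite -(@sign_prod R n j (ltn_ord j)) sn -!big_split; apply: eq_bigr => a _.
have ne : bump j a != j by have := neq_lift j a; rewrite eq_sym -val_eqE.
rewrite ne bump_ltj.
have [h1 _] := gen_nz gen (ltn_ord (lift j a)) (ltn_ord j) (elimN eqP ne).
have ne' : (j : nat) <> lift j a by move=> E; move: ne; rewrite [X in _ != X]E eqxx.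
have [_ h2] := gen_nz gen (ltn_ord j) (ltn_ord (lift j a)) ne'.
rewrite epsj in h2.
have EL : gp zeta s lam (bump j a) (xi n) / hp zeta s lam j (bump j a) *
   Ufun zeta s lam j (bump j a) = - csinh (lam (bump j a) - xi n - iz / 2).
  rewrite /gp /hp /Ufun epsj.
  exact: (elem_minus (eps_cases R s (bump j a)) hlam h1 h2).
case: (a < j)%N.
  rewrite -[RHS]/(((-1) * (-1)) * csinh (lam (bump j a) - xi n - iz / 2)).
  by rewrite UfunC mulrN EL mulrNN !mul1r opprK.
rewrite -[RHS]/((1 * (-1)) * csinh (lam (bump j a) - xi n - iz / 2)).
by rewrite EL mul1r mulN1r.
Qed.

End Main4.

Section Main5.
Variable R : realType.
Local Notation C := R[i].
Variable zeta : R.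
Local Notation iz := (izeta zeta).

Lemma swapf_prod m k (xi : nat -> C) (c : C) : (k.+1 < m)%N ->
  \prod_(a < m | a != k :> nat) csinh (c - swapf k xi a - iz / 2) =
  \prod_(a < m | a != k.+1 :> nat) csinh (c - xi a - iz / 2).
Proof.
move=> hk; have hk0 : (k < m)%N by lia.
pose i0 := Ordinal hk0; pose i1 := Ordinal hk.
have Hi : val i1 = (val i0).+1 by [].
rewrite [RHS](reindex_inj (@perm_inj _ (tperm i0 i1))).
apply: eq_big => a.
  rewrite (tpvalN Hi) /=.
  case: (nat_of_ord a =P k) => h1; case: (nat_of_ord a =P k.+1) => h2 /=; try congruence; rewrite ?eqxx //; symmetry; apply/negP => /eqP; lia.
move=> _; rewrite (tpvalN Hi) /= /swapf.
by case: eqP => // _; case: eqP.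
Qed.

Lemma swap_hat k (xi : nat -> C) : hat k (swapf k xi) = hat k.+1 xi.
Proof.
apply: functional_extensionality => a; rewrite /hat /swapf.
by do ! (case: ifP => ? /=); try (congr xi; lia); lia.
Qed.

Lemma swapfK k (xi : nat -> C) : swapf k (swapf k xi) = xi.
Proof.
apply: functional_extensionality => a; rewrite /swapf.
case: (a =P k) => [->|_]; first by rewrite (_ : (k.+1 == k) = false) ?eqxx //; lia.
by case: (a =P k.+1) => [->|_]; rewrite ?eqxx.
Qed.

End Main5.

Unset Implicit Arguments.

Theorem lemma3p4 (R : realType) (zeta : R) (m s j k : nat)
  (lam xi : nat -> R[i]) :
  0 < zeta < pi ->
  (2 <= m)%N -> (s <= m)%N -> (j < m)%N -> (k < m)%N ->
  lam j = xi k - izeta zeta / 2 ->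
  generic zeta s m lam ->
  ((s <= j)%N ->
    tGs zeta s m lam xi =
      (\prod_(a < m | a != k :> nat) csinh (lam j - xi a - izeta zeta / 2)) *
      (\prod_(a < m | a != j :> nat) csinh (lam a - xi k - izeta zeta / 2)) *
      tGs zeta s m.-1 (hat j lam) (hat k xi)) /\
  ((j < s)%N ->
    tGs zeta s m lam xi =
      (\prod_(a < m | a != k :> nat) csinh (lam j - xi a - izeta zeta / 2)) *
      (\prod_(a < m | a != j :> nat) csinh (lam a - xi k - izeta zeta / 2)) *
      tGs zeta s.-1 m.-1 (hat j lam) (hat k xi)).
Proof.
move=> _ hm _ hj hk hlam gen.
case: m hm hj hk gen => [//|n] _ hj hk gen.
pose J := Ordinal hj.
split => hsj.
- elim: k xi hk hlam => [|k IH] xi hk hlam.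
    exact: (base_plus (j := J) hsj hlam gen).
  have hk' : (k < n.+1)%N by lia.
  rewrite (tGs_swap xi gen hk).
  have hl' : lam j = swapf k xi k - izeta zeta / 2 by rewrite /swapf eqxx.
  rewrite (IH _ hk' hl') (swapf_prod _ _ _ hk) swap_hat.
  by rewrite /swapf eqxx.
- have : (k + (n - k) = n)%N by lia.
  move: (n - k)%N => d; elim: d k xi hk hlam => [|d IH] k xi hk hlam hd.
    rewrite addn0 in hd; subst k.
    exact: (base_minus (j := J) hsj hlam gen).
  have hk1 : (k.+1 < n.+1)%N by lia.
  rewrite (tGs_swap xi gen hk1).
  have hl' : lam j = swapf k xi k.+1 - izeta zeta / 2.
    by rewrite /swapf (_ : (k.+1 == k) = false) ?eqxx //; lia.
  have hd' : (k.+1 + d = n)%N by lia.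
  rewrite (IH _ _ hk1 hl' hd').
  rewrite -(swapf_prod _ _ _ hk1) swapfK -swap_hat swapfK.
  by rewrite /swapf (_ : (k.+1 == k) = false) ?eqxx //; lia.
Qed.
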